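(* Suppose Assumptions 1 and 2 hold and the inverse demand function $p$ is convex. If $\mathbf{x}$ is a Cournot candidate with $X=\sum_{n=1}^N x_n>0$, then $p$ is differentiable at $X$, i.e., $\partial_-p(X)=\partial_+p(X)$.
   Context: Cournot model: $N$ suppliers, inverse demand $p:[0,\infty)\to[0,\infty)$, supplier $n$ has cost $C_n:[0,\infty)\to[0,\infty)$ and chooses $x_n\ge0$; $X=\sum_n x_n$. $\partial_\pm$ denote right/left derivatives; $C_n'(0)$ is the right derivative at $0$. Assumption 1: each $C_n$ is convex, continuous, nondecreasing on $[0,\infty)$, continuously differentiable on $(0,\infty)$, with $C_n(0)=0$. Assumption 2: $p$ is continuous, nonnegative, nonincreasing, $p(0)>0$; its right derivative at $0$ exists and at every $q>0$ its left and right derivatives exist. A nonnegative vector $\mathbf{x}$ is a Cournot candidate if for every $n$: $C_n'(x_n)\le p(X)+x_n\,\partial_-p(X)$ whenever $x_n>0$, and $C_n'(x_n)\ge p(X)+x_n\,\partial_+p(X)$. *)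

(* Defs.v *)
From Stdlib Require Import Reals Lra.
Open Scope R_scope.

Definition right_deriv (f : R -> R) (x l : R) : Prop :=
  forall eps, 0 < eps -> exists delta, 0 < delta /\
    forall h, 0 < h < delta -> Rabs ((f (x + h) - f x) / h - l) < eps.

Definition left_deriv (f : R -> R) (x l : R) : Prop :=
  forall eps, 0 < eps -> exists delta, 0 < delta /\
    forall h, 0 < h < delta -> Rabs ((f x - f (x - h)) / h - l) < eps.

Definition continuous_on_nonneg (f : R -> R) : Prop :=
  forall x, 0 <= x -> forall eps, 0 < eps -> exists delta, 0 < delta /\
    forall y, 0 <= y -> Rabs (y - x) < delta -> Rabs (f y - f x) < eps.

Definition convex_on_nonneg (f : R -> R) : Prop :=
  forall x y t, 0 <= x -> 0 <= y -> 0 <= t <= 1 ->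
    f (t * x + (1 - t) * y) <= t * f x + (1 - t) * f y.

Definition nondecreasing_on_nonneg (f : R -> R) : Prop :=
  forall x y, 0 <= x -> x <= y -> f x <= f y.

Definition nonincreasing_on_nonneg (f : R -> R) : Prop :=
  forall x y, 0 <= x -> x <= y -> f y <= f x.

Definition Assumption1 (C C' : R -> R) : Prop :=
  convex_on_nonneg C /\ continuous_on_nonneg C /\ nondecreasing_on_nonneg C /\
  C 0 = 0 /\
  (forall x, 0 < x -> derivable_pt_lim C x (C' x)) /\
  (forall x, 0 < x -> continuity_pt C' x) /\
  right_deriv C 0 (C' 0).

Definition Assumption2 (p dpL dpR : R -> R) : Prop :=
  continuous_on_nonneg p /\ (forall q, 0 <= q -> 0 <= p q) /\
  nonincreasing_on_nonneg p /\ 0 < p 0 /\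
  (forall q, 0 <= q -> right_deriv p q (dpR q)) /\
  (forall q, 0 < q -> left_deriv p q (dpL q)).

Fixpoint total (N : nat) (x : nat -> R) : R :=
  match N with
  | O => 0
  | S k => total k x + x k
  end.

Definition cournot_candidate (N : nat) (C' : nat -> R -> R)
  (p dpL dpR : R -> R) (x : nat -> R) : Prop :=
  (forall n, (n < N)%nat -> 0 <= x n) /\
  (forall n, (n < N)%nat ->
     (0 < x n -> C' n (x n) <= p (total N x) + x n * dpL (total N x)) /\
     C' n (x n) >= p (total N x) + x n * dpR (total N x)).

(* Main.v *)
Require Import Defs.
From Stdlib Require Import Reals Lra Lia.
Open Scope R_scope.

Lemma pos_exists (N : nat) (x : nat -> R) :
  0 < total N x -> exists n, (n < N)%nat /\ 0 < x n.
Proof.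
  induction N as [|k IH]; simpl; intro H.
  - lra.
  - destruct (Rlt_le_dec 0 (x k)) as [h|h].
    + exists k; split; [lia|exact h].
    + destruct IH as [n [Hn Hx]]; [lra|]. exists n; split; [lia|exact Hx].
Qed.

Lemma convex_LR (p : R -> R) (X l r : R) :
  convex_on_nonneg p -> 0 < X -> left_deriv p X l -> right_deriv p X r -> l <= r.
Proof.
  intros Hc HX HL HR.
  destruct (Rle_dec l r) as [|Hn]; [assumption|].
  exfalso.
  set (eps := (l - r) / 2).
  assert (He : 0 < eps) by (unfold eps; lra).
  destruct (HL eps He) as [d1 [Hd1 H1]].
  destruct (HR eps He) as [d2 [Hd2 H2]].
  set (h := Rmin (Rmin d1 d2) X / 2).
  assert (Hm1 : Rmin (Rmin d1 d2) X <= Rmin d1 d2) by apply Rmin_l.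
  assert (Hm2 : Rmin (Rmin d1 d2) X <= X) by apply Rmin_r.
  assert (Hm3 : Rmin d1 d2 <= d1) by apply Rmin_l.
  assert (Hm4 : Rmin d1 d2 <= d2) by apply Rmin_r.
  assert (Hm0 : 0 < Rmin (Rmin d1 d2) X) by (repeat apply Rmin_pos; lra).
  assert (Hh : 0 < h) by (unfold h; lra).
  specialize (H1 h ltac:(unfold h; lra)).
  specialize (H2 h ltac:(unfold h; lra)).
  pose proof (Hc (X - h) (X + h) (1/2) ltac:(unfold h; lra) ltac:(lra) ltac:(lra)) as Hcv.
  replace (1 / 2 * (X - h) + (1 - 1 / 2) * (X + h)) with X in Hcv by field.
  apply Rabs_def2 in H1. apply Rabs_def2 in H2.
  destruct H1 as [H1a H1b]. destruct H2 as [H2a H2b].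
  assert (A : (p X - p (X - h)) / h <= (p (X + h) - p X) / h).
  { unfold Rdiv. apply Rmult_le_compat_r.
    - left; apply Rinv_0_lt_compat; lra.
    - lra. }
  unfold eps in *. lra.
Qed.

Theorem proposition3 (N : nat) (C C' : nat -> R -> R) (p dpL dpR : R -> R)
  (x : nat -> R) :
  (forall n, (n < N)%nat -> Assumption1 (C n) (C' n)) ->
  Assumption2 p dpL dpR ->
  convex_on_nonneg p ->
  cournot_candidate N C' p dpL dpR x ->
  0 < total N x ->
  dpL (total N x) = dpR (total N x).
Proof.
  intros _ [_ [_ [_ [_ [HR HL]]]]] Hc [_ Hcc] Hpos.
  destruct (pos_exists N x Hpos) as [n [Hn Hx]].
  destruct (Hcc n Hn) as [Ha Hb].
  specialize (Ha Hx).
  assert (G : x n * dpR (total N x) <= x n * dpL (total N x)) by lra.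
  apply Rmult_le_reg_l in G; [|exact Hx].
  pose proof (convex_LR p (total N x) _ _ Hc Hpos (HL _ Hpos) (HR _ (Rlt_le _ _ Hpos))).
  lra.
Qed.
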